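(* Let $A$ be an $N\times N$ $(0,1)$-matrix such that every row and every column contains at least $N-2$ ones. Then, for all $N\geq 400$, $\operatorname{perm}(A)>\frac{1}{7.5}N!$.
   Context: $\operatorname{perm}(A)=\sum_{\pi\in\Sigma_N}\prod_{i=1}^N a_{i\pi(i)}$ is the permanent. *)

(* Defs.v *)
From mathcomp Require Import all_boot all_order all_algebra all_fingroup.
Set Implicit Arguments. Unset Strict Implicit. Unset Printing Implicit Defensive.
Import GRing.Theory Num.Theory.

Definition permanent (R : comRingType) (N : nat) (A : 'M[R]_N) : R :=
  (\sum_(s : 'S_N) \prod_(i < N) A i (s i))%R.

(* Main.v *)
Require Import Defs.
From mathcomp Require Import all_boot all_order all_algebra all_fingroup.
From mathcomp Require Import zify ring lra.
Import GRing.Theory Num.Theory.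
Set Implicit Arguments. Unset Strict Implicit. Unset Printing Implicit Defensive.

Definition hit N (A : 'M[rat]_N) (s : 'S_N) : {set 'I_N} := [set i | A i (s i) != 1%R].
Definition X N (A : 'M[rat]_N) (s : 'S_N) := #|hit A s|.
Definition W N (A : 'M[rat]_N) t := \sum_(s : 'S_N) (X A s == t : nat).

Lemma sum_bool_card (T : finType) (P : pred T) : \sum_(x : T) (P x : nat) = #|[set x | P x]|.
Proof. by rewrite -sum1dep_card [RHS]big_mkcond. Qed.

Lemma zeros_row N (A : 'M[rat]_N) i :
  (N - 2 <= #|[set j | A i j == 1%R]|)%N -> (#|[set j | A i j != 1%R]| <= 2)%N.
Proof.
move=> h; have := cardsC [set j | A i j == 1%R].
have -> : ~: [set j | A i j == 1%R] = [set j | A i j != 1%R].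
  by apply/setP=> j; rewrite !inE.
rewrite card_ord; lia.
Qed.

Lemma zeros_col N (A : 'M[rat]_N) j :
  (N - 2 <= #|[set i | A i j == 1%R]|)%N -> (#|[set i | A i j != 1%R]| <= 2)%N.
Proof.
move=> h; have := cardsC [set i | A i j == 1%R].
have -> : ~: [set i | A i j == 1%R] = [set i | A i j != 1%R].
  by apply/setP=> i; rewrite !inE.
rewrite card_ord; lia.
Qed.

Lemma perm_W0 N (A : 'M[rat]_N) : (forall i j, A i j = 0%R \/ A i j = 1%R) ->
  permanent A = ((W A 0)%:R)%R.
Proof.
move=> h01; rewrite /permanent /W natr_sum; apply: eq_bigr => s _.
case: (boolP (X A s == 0)) => hX.
  rewrite big1 // => i _; move: hX; rewrite /X cards_eq0 => /eqP /setP /(_ i).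
  by rewrite !inE => /negbFE /eqP.
move: hX; rewrite /X cards_eq0 => /set0Pn [i]; rewrite inE => hi.
rewrite (bigD1 i) //=; have [->|h1] := h01 i (s i); first by rewrite mul0r.
by rewrite h1 eqxx in hi.
Qed.

Definition cnt N (i j : 'I_N) := \sum_(s : 'S_N) (s i == j : nat).

Lemma cnt_l N (i j : 'I_N) : cnt i j = cnt i i.
Proof.
rewrite /cnt (reindex_inj (mulIg (tperm i j))); apply: eq_bigr => s _.
by rewrite permM -[X in _ == X](tpermL i j) (inj_eq perm_inj).
Qed.

Lemma cnt_r N (i j : 'I_N) : cnt i j = cnt j j.
Proof.
rewrite /cnt (reindex_inj (mulgI (tperm i j))); apply: eq_bigr => s _.
by rewrite permM tpermL.
Qed.

Lemma sumS1 N : \sum_(s : 'S_N) 1 = N`!.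
Proof. by rewrite sum1_card card_Sn. Qed.

Lemma cnt_row N (i : 'I_N) : \sum_j cnt i j = N`!.
Proof.
rewrite /cnt exchange_big /= -sumS1; apply: eq_bigr => s _.
rewrite (bigD1 (s i)) //= eqxx big1 // => j hj; by rewrite eq_sym (negPf hj).
Qed.

Lemma X_sum N (A : 'M[rat]_N) s : X A s = \sum_i (A i (s i) != 1%R : nat).
Proof. by rewrite /X /hit -(sum_bool_card (fun i => A i (s i) != 1%R)). Qed.

Lemma mean N (A : 'M[rat]_N) (k : 'I_N) :
  (forall i : 'I_N, (N - 2 <= #|[set j | A i j == 1%R]|)%N) ->
  (\sum_(s : 'S_N) X A s <= 2 * N`!)%N.
Proof.
move=> hr.
have e1 : \sum_(s : 'S_N) X A s = \sum_i \sum_j (A i j != 1%R) * cnt i i.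
  rewrite (eq_bigr _ (fun s _ => X_sum A s)).
  rewrite exchange_big /=; apply: eq_bigr => i _; symmetry.
  under eq_bigr => j _ do rewrite -(cnt_l i j) /cnt big_distrr /=.
  rewrite exchange_big /=; apply: eq_bigr => s _.
  rewrite (bigD1 (s i)) //= eqxx muln1 big1 ?addn0 // => j hj.
  by rewrite [s i == j]eq_sym (negPf hj) muln0.
have e2 : forall i : 'I_N, cnt i i = cnt k k.
  by move=> i; rewrite -(cnt_l i k) cnt_r.
have e3 : \sum_(i < N) cnt k k = N`! by rewrite -(cnt_row k); apply: eq_bigr => j _; rewrite cnt_l.
rewrite e1 -e3 big_distrr /=; apply: leq_sum => i _.
rewrite -big_distrl /= e2 leq_mul2r sum_bool_card.
by rewrite zeros_row // orbT.
Qed.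

Lemma row_pre N (A : 'M[rat]_N) (s : 'S_N) i :
  (N - 2 <= #|[set j | A i j == 1%R]|)%N ->
  (#|[set i' | A i (s i') != 1%R]| <= 2)%N.
Proof.
move=> h; have -> : [set i' | A i (s i') != 1%R] = s @^-1: [set j | A i j != 1%R].
  by apply/setP => x; rewrite !inE.
by rewrite card_preimset ?zeros_row //; apply: perm_inj.
Qed.

Lemma hitC_card N (A : 'M[rat]_N) s : #|~: hit A s| = N - X A s.
Proof. by have := cardsC (hit A s); rewrite card_ord /X; lia. Qed.

Lemma good_card N (A : 'M[rat]_N) (s : 'S_N) i :
  (forall i : 'I_N, (N - 2 <= #|[set j | A i j == 1%R]|)%N) ->
  (forall j : 'I_N, (N - 2 <= #|[set i | A i j == 1%R]|)%N) ->
  i \in hit A s ->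
  (N - (X A s).+2 <= \sum_i' ([&& i' \notin hit A s, A i (s i') == 1%R & A i' (s i) == 1%R] : nat))%N.
Proof.
move=> hr hc hi.
rewrite sum_bool_card.
set B1 := [set i' | A i (s i') != 1%R] :\ i.
set B2 := [set i' | A i' (s i) != 1%R] :\ i.
have sub : ~: hit A s :\: (B1 :|: B2) \subset
   [set x | [&& x \notin hit A s, A i (s x) == 1%R & A x (s i) == 1%R]].
  apply/subsetP => x; rewrite /B1 /B2 !inE.
  case: (x =P i) => [->|_] /=; first by rewrite negbK => ->.
  by case: (A i (s x) == 1%R); case: (A x (s i) == 1%R); case: (A x (s x) == 1%R).
apply: leq_trans (subset_leq_card sub).
have hiS : i \in hit A s := hi.
rewrite /hit inE in hi.
have c1 : (#|B1| <= 1)%N.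
  have := cardsD1 i [set i' | A i (s i') != 1%R]; rewrite inE hi /=.
  by move=> e; have := row_pre s (hr i); rewrite e add1n ltnS.
have c2 : (#|B2| <= 1)%N.
  have := cardsD1 i [set i' | A i' (s i) != 1%R]; rewrite inE hi /=.
  by move=> e; have := zeros_col (hc (s i)); rewrite e add1n ltnS.
have cU : (#|B1 :|: B2| <= 2)%N.
  rewrite cardsU; apply: leq_trans (leq_subr _ _) _; exact: (leq_add c1 c2).
rewrite cardsD hitC_card.
have : (#|~: hit A s :&: (B1 :|: B2)| <= #|B1 :|: B2|)%N by apply/subset_leq_card/subsetIr.
lia.
Qed.

Definition cond N (A : 'M[rat]_N) t (s : 'S_N) i i' :=
  [&& X A s == t.+1, i \in hit A s, i' \notin hit A s, A i (s i') == 1%R & A i' (s i) == 1%R].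

Lemma key N (A : 'M[rat]_N) t (s : 'S_N) i i' :
  cond A t (tperm i i' * s)%g i i' -> [&& X A s == t, i \notin hit A s & A i (s i') != 1%R].
Proof.
rewrite /cond; set s0 := (tperm i i' * s)%g.
have s0i : s0 i = s i' by rewrite permM tpermL.
have s0i' : s0 i' = s i by rewrite permM tpermR.
case/and5P => /eqP hX hi hi' h1 h2.
have hi2 := hi; rewrite /hit inE s0i in hi2.
rewrite s0i' in h1; rewrite s0i in h2.
have nii' : i != i' by apply: contraNneq hi' => <-.
have hS : hit A s = hit A s0 :\ i.
  apply/setP => x; rewrite !inE.
  case: (x =P i) => [->|/eqP xi] /=; first by rewrite h1.
  case: (x =P i') => [->|/eqP xi'] /=.
    by rewrite h2 /=; move: hi'; rewrite inE => /negbTE ->.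
  by rewrite permM tpermD // eq_sym.
rewrite /hit inE h1 hi2 andbT andbT /X hS.
have := cardsD1 i (hit A s0); rewrite hi -/(X A s0) hX; lia.
Qed.

Lemma switch N (A : 'M[rat]_N) t :
  (forall i : 'I_N, (N - 2 <= #|[set j | A i j == 1%R]|)%N) ->
  (forall j : 'I_N, (N - 2 <= #|[set i | A i j == 1%R]|)%N) ->
  (t.+1 * (N - t.+3) * W A t.+1 <= 2 * (N - t) * W A t)%N.
Proof.
move=> hr hc.
set F := \sum_(s : 'S_N) \sum_i \sum_i' (cond A t s i i' : nat).
have lo : (t.+1 * (N - t.+3) * W A t.+1 <= F)%N.
  rewrite /W big_distrr /=; apply: leq_sum => s _.
  case hX: (X A s == t.+1); rewrite ?muln0 // muln1.
  have e : \sum_i \sum_i' (cond A t s i i' : nat) = \sum_(i in hit A s) \sum_i'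
      ([&& i' \notin hit A s, A i (s i') == 1%R & A i' (s i) == 1%R] : nat).
    rewrite [RHS]big_mkcond /=; apply: eq_bigr => i _; rewrite /cond hX /=.
    by case: (i \in hit A s) => //=; rewrite big1.
  rewrite e; apply: leq_trans (_ : \sum_(i in hit A s) (N - t.+3) <= _)%N.
    by rewrite sum_nat_const -/(X A s) (eqP hX).
  apply: leq_sum => i hi; have := good_card hr hc hi; by rewrite (eqP hX).
have up : (F <= 2 * (N - t) * W A t)%N.
  rewrite /F exchange_big /=; under eq_bigr => i _ do rewrite exchange_big /=.
  apply: (@leq_trans (\sum_i \sum_i' \sum_(s : 'S_N)
     ([&& X A s == t, i \notin hit A s & A i (s i') != 1%R] : nat))).
    apply: leq_sum => i _; apply: leq_sum => i' _.
    rewrite (reindex_inj (mulgI (tperm i i'))) /=; apply: leq_sum => s _.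
    by case hc': (cond A t (tperm i i' * s)%g i i') => //=; rewrite (key hc').
  under eq_bigr => i _ do rewrite exchange_big /=; rewrite exchange_big /=.
  rewrite /W big_distrr /=; apply: leq_sum => s _.
  case hX: (X A s == t) => /=; last by rewrite muln0 big1 // => i _; rewrite big1.
  rewrite muln1.
  apply: leq_trans (_ : \sum_i (i \notin hit A s) * 2 <= _)%N.
    apply: leq_sum => i _; case: (i \notin hit A s) => /=; last by rewrite big1.
    rewrite mul1n (sum_bool_card (fun i' => A i (s i') != 1%R)); exact: row_pre (hr i).
  rewrite -big_distrl /= (sum_bool_card (fun i => i \notin hit A s)) mulnC leq_mul2l.
  have -> : [set i | i \notin hit A s] = ~: hit A s by apply/setP => x; rewrite !inE.
  by rewrite hitC_card (eqP hX) leqnn orbT.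
exact: leq_trans lo up.
Qed.
Lemma ratio_le (a b N t : nat) : 400 <= N -> t <= 5 ->
  t.+1 * (N - t.+3) * b <= 2 * (N - t) * a -> t.+1 * (397 - t) * b <= 2 * (400 - t) * a.
Proof.
move=> hN ht.
have [M eM] : exists M, N = M + 400 by exists (N - 400); lia.
subst N.
have e1 : M + 400 - t.+3 = M + (397 - t) by lia.
have e2 : M + 400 - t = M + (397 - t) + 3 by lia.
have e3 : 400 - t = (397 - t) + 3 by lia.
rewrite e1 e2 e3.
have : 392 <= 397 - t by lia.
move: (397 - t) (t.+1) => K T hK h.
nia.
Qed.

Unset Implicit Arguments.
Theorem lemma14 (N : nat) (A : 'M[rat]_N) :
  (400 <= N)%N ->
  (forall i j, A i j = 0%R \/ A i j = 1%R) ->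
  (forall i : 'I_N, (N - 2 <= #|[set j | A i j == 1%R]|)%N) ->
  (forall j : 'I_N, (N - 2 <= #|[set i | A i j == 1%R]|)%N) ->
  ((N`!)%:R / (15%:R / 2%:R) < permanent A)%R.
Proof.
move=> hN h01 hr hc.
have k : 'I_N := Ordinal (leq_trans (isT : 0 < 400) hN).
rewrite perm_W0 //.
have hm := mean k hr.
have pt : forall x, 7 <= x + (7*(x==0) + 6*(x==1) + 5*(x==2) + 4*(x==3) + 3*(x==4) + 2*(x==5) + (x==6)).
  by move=> x; do 7 (case: x => [|x] //=); lia.
have eqs : \sum_(s : 'S_N) (X A s + (7*(X A s==0) + 6*(X A s==1) + 5*(X A s==2) + 4*(X A s==3)
     + 3*(X A s==4) + 2*(X A s==5) + (X A s==6)))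
   = \sum_(s : 'S_N) X A s + (7*W A 0 + 6*W A 1 + 5*W A 2 + 4*W A 3 + 3*W A 4 + 2*W A 5 + W A 6).
  by rewrite /W !big_distrr /= -!big_split.
have hp : 7 * N`! <= \sum_(s : 'S_N) X A s + (7*W A 0 + 6*W A 1 + 5*W A 2 + 4*W A 3 + 3*W A 4 + 2*W A 5 + W A 6).
  rewrite -eqs -sumS1 big_distrr /=; apply: leq_sum => s _; rewrite muln1; exact: pt.
have r0 := @ratio_le _ _ _ 0 hN isT (@switch _ A 0 hr hc).
have r1 := @ratio_le _ _ _ 1 hN isT (@switch _ A 1 hr hc).
have r2 := @ratio_le _ _ _ 2 hN isT (@switch _ A 2 hr hc).
have r3 := @ratio_le _ _ _ 3 hN isT (@switch _ A 3 hr hc).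
have r4 := @ratio_le _ _ _ 4 hN isT (@switch _ A 4 hr hc).
have r5 := @ratio_le _ _ _ 5 hN isT (@switch _ A 5 hr hc).
have f0 := fact_gt0 N.
have hnat : 2 * N`! < 15 * W A 0 by lia.
move: hnat; rewrite -(ltr_nat rat) !natrM => h.
lra.
Qed.
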